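(* Let $a,b$ be Laurent polynomials with symmetry types $\mathrm{S}a(z)=\epsilon_az^{c_a}$ and $\mathrm{S}b(z)=\epsilon_bz^{c_b}$ ($\epsilon_a,\epsilon_b\in\{\pm1\}$, $c_a,c_b\in\mathbb Z$). Suppose $b\neq0$ and $\mathrm{len}(a)>\mathrm{len}(b)$. Then there exists a Laurent polynomial $q_1$ with symmetry such that $a_1(z):=a(z)-b(z)q_1(z)$ satisfies $\mathrm{len}(a_1)<\mathrm{len}(a)$ and $\mathrm{S}a_1(z)=\mathrm{S}a(z)=\mathrm{S}b(z)\,\mathrm{S}q_1(z)$.
   Context: Laurent polynomial $u(z)=\sum_ku(k)z^k$ with finitely many nonzero complex coefficients. $u$ has symmetry of type $\epsilon z^c$ if $u(z)=\epsilon z^cu(z^{-1})$; for nonzero $u$, $\mathrm{S}u(z):=u(z)/u(z^{-1})$; the zero polynomial has symmetry of every type. For nonzero $u$, $\mathrm{len}(u):=\max\{k:u(k)\ne0\}-\min\{k:u(k)\neq0\}$, and $\mathrm{len}(0):=-\infty$. *)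

(* Defs.v *)
(* Laurent polynomials with coefficients in R[i]
   (complex numbers over a real closed field R; R = the real numbers is an
   instance), represented as finitely supported functions int -> R[i]. *)
From HB Require Import structures.
From mathcomp Require Import all_boot all_order all_algebra.
From mathcomp Require Import finmap.
From mathcomp.real_closed Require Import complex.
Set Implicit Arguments. Unset Strict Implicit. Unset Printing Implicit Defensive.
Import Order.TTheory GRing.Theory Num.Theory.
Local Open Scope fset_scope.
Local Open Scope ring_scope.

Section Laurent.
Variable R : rcfType.
Local Notation C := (complex R).

Definition laurent := {fsfun int -> C with 0}.

Definition lnonzero (u : laurent) : Prop := exists k : int, u k != 0.

(* product (convolution): (u v)(k) = sum_i u(i) v(k-i); the coefficient
   vanishes outside { i + j | i in supp u, j in supp v }. *)
Definition lmul (u v : laurent) : laurent :=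
  [fsfun k in [fset (i + j)%R | i in finsupp u, j in finsupp v] =>
     \sum_(i <- finsupp u) u i * v (k - i) | 0].

Definition lsub (u v : laurent) : laurent :=
  [fsfun k in finsupp u `|` finsupp v => u k - v k | 0].

(* u has symmetry of type eps z^c :  u(z) = eps z^c u(z^{-1}),
   i.e. coefficientwise  u(k) = eps * u(c - k). *)
Definition lsym (u : laurent) (eps : C) (c : int) : Prop :=
  forall k : int, u k = eps * u (c - k).

(* len u = max supp - min supp for u <> 0, and None (= -oo) for u = 0 *)
Definition len (u : laurent) : option nat :=
  match enum_fset (finsupp u) with
  | [::] => None
  | x :: s => Some `|foldr Num.max x s - foldr Num.min x s|%N
  end.

End Laurent.

Definition ltlen (x y : option nat) : bool :=
  match x, y with
  | _, None => false
  | None, Some _ => true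
  | Some m, Some n => (m < n)%N
  end.

(* Main.v *)
Require Import Defs.
From HB Require Import structures.
From mathcomp Require Import all_boot all_order all_algebra.
From mathcomp Require Import finmap.
From mathcomp.real_closed Require Import complex.
From mathcomp Require Import zify ring.
Set Implicit Arguments. Unset Strict Implicit.
Import Order.TTheory GRing.Theory Num.Theory.
Local Open Scope ring_scope.

Lemma foldr_max (x : int) s :
  foldr Num.max x s \in x :: s /\ forall y, y \in x :: s -> y <= foldr Num.max x s.
Proof.
elim: s => [|z s [IH1 IH2]] /=; first by split=> [|y]; rewrite inE // => /eqP->.
split.
  case: (leP z (foldr Num.max x s)) => _.
    by move: IH1; rewrite !inE => /orP[->|->]; rewrite ?orbT.
  by rewrite !inE eqxx orbT.
move=> y; rewrite !inE le_max => /or3P[/eqP->|/eqP->|H].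
- by rewrite IH2 ?orbT // inE eqxx ?orbT.
- by rewrite lexx.
- by rewrite IH2 ?orbT // inE H ?orbT.
Qed.

Lemma foldr_min (x : int) s :
  foldr Num.min x s \in x :: s /\ forall y, y \in x :: s -> foldr Num.min x s <= y.
Proof.
elim: s => [|z s [IH1 IH2]] /=; first by split=> [|y]; rewrite inE // => /eqP->.
split.
  case: (leP z (foldr Num.min x s)) => _.
    by rewrite !inE eqxx ?orbT.
  by move: IH1; rewrite !inE => /orP[->|->]; rewrite ?orbT.
move=> y; rewrite !inE ge_min => /or3P[/eqP->|/eqP->|H].
- by rewrite IH2 ?orbT // inE eqxx ?orbT.
- by rewrite lexx ?orbT.
- by rewrite IH2 ?orbT // inE H ?orbT.
Qed.

Section H.
Variable R : rcfType.

Lemma len_spec (u : laurent R) : lnonzero u -> exists m M : int,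
  [/\ len u = Some `|M - m|%N, u m != 0, u M != 0 &
      forall k, u k != 0 -> m <= k <= M].
Proof.
move=> [k0 Hk0]; rewrite /len.
have memE k : (k \in finsupp u) = (k \in enum_fset (finsupp u)) by [].
case E: (enum_fset (finsupp u)) => [|x s].
  by move: Hk0; rewrite -mem_finsupp memE E.
have [M1 M2] := foldr_max x s; have [m1 m2] := foldr_min x s.
exists (foldr Num.min x s), (foldr Num.max x s); split => //.
- by rewrite -mem_finsupp memE E.
- by rewrite -mem_finsupp memE E.
- by move=> k; rewrite -mem_finsupp memE E => Hk; rewrite m2 // M2.
Qed.

Lemma len_lt (u : laurent R) (lo hi : int) :
  (forall k, u k != 0 -> lo < k < hi) -> ltlen (len u) (Some `|hi - lo|%N).
Proof.
move=> H.
have memE k : (k \in finsupp u) = (k \in enum_fset (finsupp u)) by [].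
case E: (enum_fset (finsupp u)) => [|x s]; first by rewrite /len E.
have Hx : u x != 0 by rewrite -mem_finsupp memE E inE eqxx.
have [m [M [-> Hm HM Hb]]] := len_spec (ex_intro _ x Hx : lnonzero u).
have := H _ Hm; have := H _ HM; have := Hb _ Hm; rewrite /=.
lia.
Qed.
Lemma lsubE (u v : laurent R) k : lsub u v k = u k - v k.
Proof.
rewrite /lsub fsfunE inE !mem_finsupp; case: ifP => // /norP[].
by rewrite !negbK => /eqP-> /eqP->; rewrite subrr.
Qed.

Lemma lmulE (u v : laurent R) k :
  lmul u v k = \sum_(i <- finsupp u) u i * v (k - i).
Proof.
rewrite /lmul fsfunE; case: ifP => // Hk.
rewrite big_seq big1 // => i Hi.
have [/eqP->|Hv] := boolP (v (k - i) == 0); first by rewrite mulr0.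
move/negP: Hk; case; apply/imfset2P; exists i => //; exists (k - i).
  by rewrite mem_finsupp.
by rewrite addrC subrK.
Qed.

Lemma sum_delta (u : laurent R) x :
  \sum_(i <- finsupp u) u i * (i == x)%:R = u x.
Proof.
have [H|H] := boolP (x \in finsupp u).
  rewrite (bigD1_seq x H (fset_uniq _)) /= eqxx mulr1 big1 ?addr0 //.
  by move=> i /negPf ->; rewrite mulr0.
rewrite big_seq big1; last first.
  move=> i Hi; case: eqP => [Ei|]; last by rewrite mulr0.
  by move: H; rewrite -Ei Hi.
by move: H; rewrite memNfinsupp => /eqP.
Qed.
Lemma out0 (u : laurent R) (m M : int) :
  (forall k, u k != 0 -> m <= k <= M) -> forall k, (k < m) || (M < k) -> u k = 0.
Proof.
move=> H k Hk; apply/eqP; apply: contraTT Hk => /H.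
rewrite negb_or -!leNgt => /andP[-> ->] //.
Qed.

Lemma sym_bounds (u : laurent R) e c (m M : int) :
  e != 0 -> lsym u e c -> u m != 0 -> u M != 0 ->
  (forall k, u k != 0 -> m <= k <= M) -> c = m + M.
Proof.
move=> He Hs Hm HM Hb.
have h1 : u (c - M) != 0 by move: HM; rewrite Hs mulf_eq0 negb_or => /andP[].
have h2 : u (c - m) != 0 by move: Hm; rewrite Hs mulf_eq0 negb_or => /andP[].
have := Hb _ h1; have := Hb _ h2; lia.
Qed.

Lemma lmul_q (u q : laurent R) d e (x y : complex R) :
  (forall k, q k = (k == d)%:R * x + (k == e)%:R * y) ->
  forall k, lmul u q k = u (k - d) * x + u (k - e) * y.
Proof.
move=> Hq k; rewrite lmulE.
under eq_bigr => i _ do rewrite Hq mulrDr !mulrA.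
rewrite big_split /= -!mulr_suml.
have E (z i : int) : (k - i == z) = (i == k - z).
  by apply/eqP/eqP; lia.
rewrite -(sum_delta u (k - d)) -(sum_delta u (k - e)).
by congr (_ * _ + _ * _); apply: eq_bigr => i _; rewrite E.
Qed.


Lemma sym_aux (eq x y al : complex R) : eq * eq = 1 ->
  x * al + y * (eq * al) = eq * (y * al + x * (eq * al)).
Proof.
move=> h; rewrite mulrDr addrC; congr (_ + _); first by rewrite mulrCA.
by rewrite [RHS]mulrCA [eq * (eq * al)]mulrA h mul1r.
Qed.
End H.



Theorem lemma3p5 (R : rcfType) (a b : laurent R) (ea eb : complex R) (ca cb : int) :
  (ea == 1) || (ea == -1) -> (eb == 1) || (eb == -1) ->
  lnonzero a -> lsym a ea ca ->
  lnonzero b -> lsym b eb cb ->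
  ltlen (len b) (len a) ->
  exists (q1 : laurent R) (eq : complex R) (cq : int),
    [/\ lnonzero q1, (eq == 1) || (eq == -1), lsym q1 eq cq,
        ltlen (len (lsub a (lmul b q1))) (len a)
        /\ lsym (lsub a (lmul b q1)) ea ca
      & ea = eb * eq /\ ca = cb + cq].
Proof.
move=> Hea Heb Ha Hsa Hb Hsb Hl.
have [ma [Ma [La Ham HaM Hab]]] := len_spec Ha.
have [mb [Mb [Lb Hbm HbM Hbb]]] := len_spec Hb.
have ea0 : ea != 0 by case/orP: Hea => /eqP->; rewrite ?oppr_eq0 oner_eq0.
have eb0 : eb != 0 by case/orP: Heb => /eqP->; rewrite ?oppr_eq0 oner_eq0.
have Hca := sym_bounds ea0 Hsa Ham HaM Hab.
have Hcb := sym_bounds eb0 Hsb Hbm HbM Hbb.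
have lea := Hab _ Ham. have leb := Hbb _ Hbm.
move: Hl; rewrite La Lb /= => Hl.
pose eq := ea * eb; pose cq := ca - cb; pose d := Ma - Mb; pose e := ma - mb.
pose al := a Ma / b Mb.
have eq2 : eq * eq = 1.
  by rewrite /eq; move: Hea Heb => /orP[]/eqP-> /orP[]/eqP->; ring.
pose q1 : laurent R :=
  [fsfun k in [fset d; e]%fset => (k == d)%:R * al + (k == e)%:R * (eq * al) | 0].
have q1E k : q1 k = (k == d)%:R * al + (k == e)%:R * (eq * al).
  rewrite /q1 fsfunE in_fset2; case: ifP => // /norP[/negPf-> /negPf->].
  by rewrite !mul0r addr0.
have de : d != e by apply/eqP; rewrite /d /e; lia.
have bq := lmul_q b q1E.
have Hc k : lsub a (lmul b q1) k = a k - (b (k - d) * al + b (k - e) * (eq * al)).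
  by rewrite lsubE bq.
have symc : lsym (lsub a (lmul b q1)) ea ca.
  move=> k; rewrite !Hc Hsa (Hsb (k - d)) (Hsb (k - e)).
  have -> : cb - (k - d) = (ca - k) - e by rewrite /d /e; lia.
  have -> : cb - (k - e) = (ca - k) - d by rewrite /d /e; lia.
  by rewrite /eq; move: Hea Heb => /orP[]/eqP-> /orP[]/eqP->; ring.
have top k : Ma <= k -> lsub a (lmul b q1) k = 0.
  rewrite le_eqVlt => /orP[/eqP<-|lt].
    rewrite Hc (out0 Hbb (k:=Ma - e)); last by apply/orP; right; rewrite /e; lia.
    have -> : Ma - d = Mb by rewrite /d; lia.
    by rewrite mul0r addr0 /al mulrC divfK // subrr.
  rewrite Hc (out0 Hab (k:=k)) ?lt ?orbT //.
  rewrite (out0 Hbb (k:=k - d)); last by apply/orP; right; rewrite /d; lia.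
  rewrite (out0 Hbb (k:=k - e)); last by apply/orP; right; rewrite /e; lia.
  by rewrite !mul0r addr0 subrr.
have bot k : k <= ma -> lsub a (lmul b q1) k = 0.
  by move=> h; rewrite symc top ?mulr0 //; lia.
exists q1, eq, cq; split.
- exists d; rewrite q1E eqxx (negPf de) mul0r addr0 mul1r.
  by rewrite mulf_neq0 ?invr_eq0.
- by rewrite /eq; move: Hea Heb => /orP[]/eqP-> /orP[]/eqP->;
    rewrite ?(mulN1r, mul1r, opprK, eqxx, orbT).
- move=> k; rewrite !q1E.
  have -> : (cq - k == d) = (k == e) by apply/eqP/eqP; rewrite /cq /d /e; lia.
  have -> : (cq - k == e) = (k == d) by apply/eqP/eqP; rewrite /cq /d /e; lia.
  exact: sym_aux.
- split => //; apply: len_lt => k; apply: contraR.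
  rewrite negb_and -!leNgt => /orP[h|h]; apply/eqP; [exact: bot|exact: top].
- split; first by rewrite /eq; move: Hea Heb => /orP[]/eqP-> /orP[]/eqP->; ring.
  by rewrite /cq addrC subrK.
Qed.
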